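(* Let $R$ be a commutative ring, $C$ a semidualizing $R$-module, and $M$ an $R$-module of finite $G_C$-projective dimension with a strict $G_C$-projective resolution $G$. Then the augmented resolution $0\to C\otimes_R P_n\to\cdots\to C\otimes_R P_1\to G_0\to M\to 0$ is $G_C$-proper, i.e. applying $\operatorname{Hom}_R(H,-)$ to it yields an exact complex for every $G_C$-projective $R$-module $H$.
   Context: $R$ is a commutative ring with identity. An $R$-module $C$ is semidualizing if (a) $C$ admits a projective resolution by finitely generated projective modules, (b) the homothety map $R\to\operatorname{Hom}_R(C,C)$ is an isomorphism, and (c) $\operatorname{Ext}^i_R(C,C)=0$ for all $i\geq 1$. A complete $PC$-resolution is an exact sequence $X=\cdots\to P_1\to P_0\to C\otimes_R Q^0\to C\otimes_R Q^1\to\cdots$ with all $P_i,Q^i$ projective such that $\operatorname{Hom}_R(X,C\otimes_R Q)$ is exact for every projective $Q$; $M$ is $G_C$-projective if $M\cong\operatorname{Coker}(P_1\to P_0)$ for such an $X$. The $G_C$-projective dimension of $M$ is the infimum of lengths of resolutions of $M$ by $G_C$-projective modules. A strict $G_C$-projective resolution of $M$ is a bounded $G_C$-projective resolution $G$ of $M$ with $G_i\cong C\otimes_R P_i$, $P_i$ projective, for every $i\geq1$. *)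

(* Defs.v *)
From HB Require Import structures.
From mathcomp Require Import all_boot all_order all_algebra.
Set Implicit Arguments. Unset Strict Implicit. Unset Printing Implicit Defensive.
Import GRing.Theory.
Local Open Scope ring_scope.

Section Defs.
Variable R : comPzRingType.

Definition exact3 (A B C : lmodType R) (f : A -> B) (g : B -> C) : Prop :=
  (forall a, g (f a) = 0) /\ (forall b, g b = 0 -> exists a, f a = b).

Definition surj (A B : lmodType R) (f : A -> B) : Prop :=
  forall b, exists a, f a = b.

Definition is_zero_mod (A : lmodType R) : Prop := forall x : A, x = 0.

(* Hom_R(-, N) applied to A --f--> B --g--> C is exact at Hom(B, N) *)
Definition hom_contra_exact (N A B C : lmodType R) (f : A -> B) (g : B -> C) : Prop :=
  forall h : {linear B -> N}, (forall a, h (f a) = 0) ->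
    exists k : {linear C -> N}, forall b, k (g b) = h b.

(* Hom_R(H, -) applied to A --f--> B --g--> C is exact at Hom(H, B) *)
Definition hom_cov_exact (H A B C : lmodType R) (f : A -> B) (g : B -> C) : Prop :=
  forall h : {linear H -> B}, (forall x, g (h x) = 0) ->
    exists k : {linear H -> A}, forall x, f (k x) = h x.

Definition projective (P : lmodType R) : Prop :=
  forall (A B : lmodType R) (g : {linear A -> B}) (f : {linear P -> B}),
    surj g -> exists h : {linear P -> A}, forall x, g (h x) = f x.

Definition fin_gen (P : lmodType R) : Prop :=
  exists n (v : 'I_n -> P), forall x : P, exists c : 'I_n -> R,
    x = \sum_(i < n) c i *: v i.

Definition bilinear_map (A B T : lmodType R) (b : A -> B -> T) : Prop :=
  (forall (r : R) x y q, b (r *: x + y) q = r *: b x q + b y q) /\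
  (forall (r : R) x p q, b x (r *: p + q) = r *: b x p + b x q).

(* T is (isomorphic to) the tensor product A (x)_R B: universal property *)
Definition is_tensor (A B T : lmodType R) : Prop :=
  exists b : A -> B -> T, bilinear_map b /\
    forall (N : lmodType R) (phi : A -> B -> N), bilinear_map phi ->
      (exists h : {linear T -> N}, forall x y, h (b x y) = phi x y) /\
      (forall h1 h2 : {linear T -> N},
         (forall x y, h1 (b x y) = phi x y) -> (forall x y, h2 (b x y) = phi x y) ->
         forall t, h1 t = h2 t).

Definition proj_resolution (M : lmodType R) (P : nat -> lmodType R)
    (d : forall n, {linear P n.+1 -> P n}) (e : {linear P 0%N -> M}) : Prop :=
  (forall n, projective (P n)) /\ surj e /\ exact3 (d 0%N) e /\
  (forall n, exact3 (d n.+1) (d n)).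

(* Ext^i_R(M, N) = 0 for all i >= 1, computed from a projective resolution *)
Definition Ext_pos_vanish (M N : lmodType R) : Prop :=
  forall (P : nat -> lmodType R) (d : forall n, {linear P n.+1 -> P n})
         (e : {linear P 0%N -> M}), proj_resolution d e ->
    forall n, forall h : {linear P n.+1 -> N}, (forall y, h (d n.+1 y) = 0) ->
      exists k : {linear P n -> N}, forall x, k (d n x) = h x.

Definition semidualizing (C : lmodType R) : Prop :=
  (exists (P : nat -> lmodType R) (d : forall n, {linear P n.+1 -> P n})
          (e : {linear P 0%N -> C}),
      proj_resolution d e /\ forall n, fin_gen (P n)) /\
  (forall r : R, (forall c : C, r *: c = 0) -> r = 0) /\
  (forall f : {linear C -> C}, exists r : R, forall c, f c = r *: c) /\
  Ext_pos_vanish C C.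

(* M is G_C-projective: M = Coker(P1 -> P0) for a complete PC-resolution
   X = ... -> P1 -> P0 -> T0 -> T1 -> ...  with T_n = C (x) Q^n *)
Definition GC_projective (C M : lmodType R) : Prop :=
  exists (P : nat -> lmodType R) (dP : forall n, {linear P n.+1 -> P n})
         (T : nat -> lmodType R) (dT : forall n, {linear T n -> T n.+1})
         (m : {linear P 0%N -> T 0%N}),
    (forall n, projective (P n)) /\
    (forall n, exists Q : lmodType R, projective Q /\ is_tensor C Q (T n)) /\
    (forall n, exact3 (dP n.+1) (dP n)) /\ exact3 (dP 0%N) m /\
    exact3 m (dT 0%N) /\ (forall n, exact3 (dT n) (dT n.+1)) /\
    (forall Q N : lmodType R, projective Q -> is_tensor C Q N ->
       (forall n, hom_contra_exact N (dP n.+1) (dP n)) /\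
       hom_contra_exact N (dP 0%N) m /\ hom_contra_exact N m (dT 0%N) /\
       (forall n, hom_contra_exact N (dT n) (dT n.+1))) /\
    (exists e : {linear P 0%N -> M}, surj e /\
       forall x, e x = 0 <-> exists y, dP 0%N y = x).

Definition GC_proj_resolution (C M : lmodType R) (n : nat) (G : nat -> lmodType R)
    (d : forall i, {linear G i.+1 -> G i}) (e : {linear G 0%N -> M}) : Prop :=
  (forall i, GC_projective C (G i)) /\
  (forall i, (n < i)%N -> is_zero_mod (G i)) /\
  surj e /\ exact3 (d 0%N) e /\ (forall i, exact3 (d i.+1) (d i)).

Definition finite_GC_pd (C M : lmodType R) : Prop :=
  exists n (G : nat -> lmodType R) (d : forall i, {linear G i.+1 -> G i})
         (e : {linear G 0%N -> M}), GC_proj_resolution C n d e.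

Definition strict_GC_resolution (C M : lmodType R) (n : nat) (G : nat -> lmodType R)
    (d : forall i, {linear G i.+1 -> G i}) (e : {linear G 0%N -> M}) : Prop :=
  GC_proj_resolution C n d e /\
  (forall i, (0 < i <= n)%N ->
     exists Q : lmodType R, projective Q /\ is_tensor C Q (G i)).

Definition GC_proper_on (H M : lmodType R) (G : nat -> lmodType R)
    (d : forall i, {linear G i.+1 -> G i}) (e : {linear G 0%N -> M}) : Prop :=
  (forall h : {linear H -> M}, exists k : {linear H -> G 0%N}, forall x, e (k x) = h x) /\
  hom_cov_exact H (d 0%N) e /\
  (forall i, hom_cov_exact H (d i.+1) (d i)).

End Defs.

(* Main.v *)
Require Import Defs.
From HB Require Import structures.
From mathcomp Require Import all_boot all_order all_algebra.
From Stdlib Require Import ClassicalDescription ClassicalEpsilon.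
From mathcomp Require Import zify.
From Stdlib Require Import Lia.
Set Implicit Arguments. Unset Strict Implicit. Unset Printing Implicit Defensive.
Import GRing.Theory.
Local Open Scope ring_scope.

Definition mk_lin (R : comPzRingType) (U V : lmodType R) (f : U -> V)
  (Hf : forall a x y, f (a *: x + y) = a *: f x + f y) : {linear U -> V} :=
  HB.pack f (GRing.isLinear.Build R U V *:%R f Hf).

Lemma mk_linE (R : comPzRingType) (U V : lmodType R) f Hf x : @mk_lin R U V f Hf x = f x.
Proof. by []. Qed.

Section Img.
Variables (R : comPzRingType) (U V : lmodType R) (g : {linear U -> V}).
Definition imb (v : V) : bool := if excluded_middle_informative (exists u, g u = v) then true else false.
Lemma imbP v : reflect (exists u, g u = v) (imb v).
Proof. rewrite /imb; case: excluded_middle_informative => H; constructor => //. Qed.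
Definition imP : {pred V} := imb.
Lemma im_closed : submod_closed imP.
Proof.
split; first by apply/imbP; exists 0; rewrite linear0.
move=> a u v /imbP[x <-] /imbP[y <-]; apply/imbP; exists (a *: x + y).
by rewrite linearP.
Qed.
HB.instance Definition _ := GRing.isSubmodClosed.Build R V imP im_closed.
Inductive imT : predArgType := ImT v & v \in imP.
Definition imval (x : imT) := let: ImT v _ := x in v.
HB.instance Definition _ := [isSub of imT for imval].
HB.instance Definition _ := [Choice of imT by <:].
HB.instance Definition _ := [SubChoice_isSubZmodule of imT by <:].
HB.instance Definition _ := [SubZmodule_isSubLmodule of imT by <:].
End Img.

Lemma lift_im (R : comPzRingType) (P A B : lmodType R) (g : {linear A -> B})
  (F : {linear P -> B}) : projective P -> (forall p, exists a, g a = F p) ->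
  exists h : {linear P -> A}, forall x, g (h x) = F x.
Proof.
move=> Pp HF.
have gin a : g a \in imP g by apply/imbP; exists a.
have Fin p : F p \in imP g by apply/imbP; apply: HF.
have g'l : forall r x y, (Sub (g (r *: x + y)) (gin _) : imT g) = r *: Sub (g x) (gin x) + Sub (g y) (gin y).
  by move=> r x y; apply: val_inj => /=; rewrite linearD linearZ.
pose g' := @mk_lin R A (imT g) (fun a => Sub (g a) (gin a)) g'l.
have F'l : forall r x y, (Sub (F (r *: x + y)) (Fin _) : imT g) = r *: Sub (F x) (Fin x) + Sub (F y) (Fin y).
  by move=> r x y; apply: val_inj => /=; rewrite linearD linearZ.
pose F' := @mk_lin R P (imT g) (fun p => Sub (F p) (Fin p)) F'l.
have [|h Hh] := Pp _ _ g' F'.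
  case=> v Hv; have /imbP[a Ha] := Hv; exists a; apply: val_inj => /=; exact: Ha.
exists h => x; have := congr1 val (Hh x); by [].
Qed.

Section Back.
Variables (R : comPzRingType) (X : nat -> lmodType R) (dl : forall j, {linear X j.+1 -> X j})
  (N : nat)
  (Ex : forall j (x : X j.+1), dl j x = 0 -> exists y, dl j.+1 y = x)
  (Dz : forall j y, dl j (dl j.+1 y) = 0)
  (Zr : forall j, (N < j)%N -> is_zero_mod (X j))
  (P : nat -> lmodType R) (dP : forall m, {linear P m.+1 -> P m})
  (Pproj : forall m, projective (P m))
  (dPdP : forall m y, dP m (dP m.+1 y) = 0)
  (Good : forall j m, (2 <= j)%N -> hom_contra_exact (X j) (dP m.+1) (dP m)).

Lemma back k : forall j (f : {linear P j -> X j.+1}), (N - j <= k)%N ->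
  (forall y, dl j (f (dP j y)) = 0) ->
  exists f' : {linear P j -> X j.+1}, (forall y, f' (dP j y) = 0) /\
     (forall x, dl j (f' x) = dl j (f x)).
Proof.
elim: k => [|k IH] j f Hk Hf.
  exists f; split => // y; apply: (Zr (j := j.+1)); rewrite ltnS; lia.
have [Hz|HNj] := ltnP N j.+1.
  exists f; split => // y; exact: (Zr Hz).
have [g Hg] : exists g : {linear P j.+1 -> X j.+2}, forall x, dl j.+1 (g x) = f (dP j x).
  have Fl : forall r x y, f (dP j (r *: x + y)) = r *: f (dP j x) + f (dP j y).
    by move=> r x y; rewrite !linearD !linearZ.
  have [g Hg] := lift_im (g := dl j.+1) (F := mk_lin Fl) (Pproj (m := j.+1))
    (fun p => Ex (Hf p)).
  by exists g.
have [||g' [Hg'1 Hg'2]] := IH j.+1 g.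
- by lia.
- by move=> y; rewrite Hg dPdP linear0.
have [s Hs] := Good (j := j.+2) (m := j) (isT : (2 <= j.+2)%N) Hg'1.
have Fl : forall r x y, f (r *: x + y) - dl j.+1 (s (r *: x + y)) =
   r *: (f x - dl j.+1 (s x)) + (f y - dl j.+1 (s y)).
  move=> r x y; rewrite !linearD !linearZ /=.
  by rewrite addrACA.
exists (mk_lin Fl); split => [y|x]; rewrite mk_linE.
  by rewrite Hs Hg'2 Hg subrr.
by rewrite linearB Dz subr0.
Qed.

Lemma lift_main (H : lmodType R) (eH : {linear P 0%N -> H}) (eHs : surj eH)
  (eHk : forall x, eH x = 0 <-> exists y, dP 0%N y = x) (h : {linear H -> X 0%N})
  (Him : forall x, exists a, dl 0%N a = h x) :
  exists k : {linear H -> X 1%N}, forall x, dl 0%N (k x) = h x.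
Proof.
have Fl : forall r x y, h (eH (r *: x + y)) = r *: h (eH x) + h (eH y).
  by move=> r x y; rewrite !linearD !linearZ.
have [f0 Hf0] := lift_im (g := dl 0%N) (F := mk_lin Fl) (Pproj (m := 0%N))
    (fun p => Him (eH p)).
have [||f' [Hf'1 Hf'2]] := back (k := N) (j := 0%N) (f := f0).
- by rewrite subn0.
- move=> y; rewrite Hf0 mk_linE.
  have -> : eH (dP 0%N y) = 0 by apply/eHk; exists y.
  by rewrite linear0.
pose sel x := proj1_sig (constructive_indefinite_description _ (eHs x)).
have selE x : eH (sel x) = x by rewrite /sel; case: constructive_indefinite_description.
have kill p : eH p = 0 -> f' p = 0.
  by move=> /eHk [y <-]; apply: Hf'1.
have Kl : forall r x y, f' (sel (r *: x + y)) = r *: f' (sel x) + f' (sel y).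
  move=> r x y; apply/eqP; rewrite -subr_eq0; apply/eqP.
  rewrite -linearZ -linearD -linearB; apply: kill.
  by rewrite linearB linearD linearZ !selE subrr.
exists (mk_lin Kl) => x; rewrite mk_linE Hf'2 Hf0 mk_linE selE //.
Qed.
End Back.

Theorem proposition3p4 (R : comPzRingType) (C M : lmodType R) :
  semidualizing C -> finite_GC_pd C M ->
  forall (n : nat) (G : nat -> lmodType R) (d : forall i, {linear G i.+1 -> G i})
         (e : {linear G 0%N -> M}),
    strict_GC_resolution C n d e ->
    forall H : lmodType R, GC_projective C H -> GC_proper_on H d e.
Proof.
move=> _ _ n G d e [[_ [Zr [se [ex0 exS]]]] Tens] H.
move=> [P [dP [T [dT [m [Pproj [_ [exP [exP0 [_ [_ [Hom [eH [eHs eHk]]]]]]]]]]]]]].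
have dPdP : forall j y, dP j (dP j.+1 y) = 0 by move=> j y; case: (exP j).
have GoodG : forall j k, (1 <= j)%N -> hom_contra_exact (G j) (dP k.+1) (dP k).
  move=> j k Hj; have [Hjn|Hnj] := leqP j n.
    have [Q [pQ tQ]] := Tens j ltac:(by rewrite Hj Hjn).
    by have [H1 _] := Hom Q (G j) pQ tQ; apply: H1.
  move=> h _.
  have Zl : forall r x y, (fun _ : P k => 0 : G j) (r *: x + y) = r *: 0 + 0.
    by move=> *; rewrite scaler0 addr0.
  exists (mk_lin Zl) => b; by rewrite [LHS](Zr j Hnj) [RHS](Zr j Hnj).
split; [|split].
- move=> h.
  pose X j := match j with 0%N => M | j'.+1 => G j' end.
  pose dl j : {linear X j.+1 -> X j} :=
    match j return {linear X j.+1 -> X j} with 0%N => e | j'.+1 => d j' end.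
  have Ex : forall j (x : X j.+1), dl j x = 0 -> exists y, dl j.+1 y = x.
    case=> [|j] x /= Hx; first by apply: (proj2 ex0).
    exact: (proj2 (exS j)).
  have Dz : forall j y, dl j (dl j.+1 y) = 0.
    case=> [|j] y /=; first by apply: (proj1 ex0).
    exact: (proj1 (exS j)).
  have Z : forall j, (n.+1 < j)%N -> is_zero_mod (X j).
    case=> // j Hj; exact: (Zr j).
  have Gd : forall j k, (2 <= j)%N -> hom_contra_exact (X j) (dP k.+1) (dP k).
    case=> // [] [] // j k _; exact: GoodG.
  exact: (@lift_main R X dl n.+1 Ex Dz Z P dP Pproj dPdP Gd H eH eHs eHk h (fun x => se (h x))).
- move=> h Hh.
  have Ex : forall j (x : G j.+1), d j x = 0 -> exists y, d j.+1 y = x.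
    move=> j x Hx; exact: (proj2 (exS j)).
  have Dz : forall j y, d j (d j.+1 y) = 0.
    move=> j y; exact: (proj1 (exS j)).
  have Gd : forall j k, (2 <= j)%N -> hom_contra_exact (G j) (dP k.+1) (dP k).
    move=> j k Hj; apply: GoodG; lia.
  exact: (@lift_main R G d n Ex Dz Zr P dP Pproj dPdP Gd H eH eHs eHk h (fun x => proj2 ex0 _ (Hh x))).
- move=> i h Hh.
  pose X j := G (j + i.+1)%N.
  pose dl j : {linear X j.+1 -> X j} := d (j + i.+1)%N.
  have Ex : forall j (x : X j.+1), dl j x = 0 -> exists y, dl j.+1 y = x.
    move=> j x Hx; exact: (proj2 (exS (j + i.+1)%N)).
  have Dz : forall j y, dl j (dl j.+1 y) = 0.
    move=> j y; exact: (proj1 (exS (j + i.+1)%N)).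
  have Z : forall j, (n < j)%N -> is_zero_mod (X j).
    move=> j Hj; apply: Zr; lia.
  have Gd : forall j k, (2 <= j)%N -> hom_contra_exact (X j) (dP k.+1) (dP k).
    move=> j k Hj; apply: GoodG; lia.
  exact: (@lift_main R X dl n Ex Dz Z P dP Pproj dPdP Gd H eH eHs eHk h (fun x => proj2 (exS i) _ (Hh x))).
Qed.
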